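(* On the 3-torus $P=\mathbb T^3=(\mathbb R/2\pi\mathbb Z)^3$ with coordinates $x,y,z$, the 1-form $\theta=\cos z\,dx+\sin z\,dy$ is a contact form (not regular), and the Lie algebra $\mathfrak X_{\mathrm{ex}}(P,\theta)$ of exact strict contact vector fields has codimension two in the Lie algebra $\mathfrak X(P,\theta)$ of strict contact vector fields. More precisely, $\mathfrak X(P,\theta)=\mathrm{Span}\{\partial_x,\partial_y\}\ltimes\mathfrak X_{\mathrm{ex}}(P,\theta)$, and the image of the flux map $X\mapsto[i_X\mu]$ restricted to $\mathfrak X(P,\theta)$ is the 2-dimensional subspace of $H^2(P,\mathbb R)$ spanned by $[dy\wedge dz]$ and $[dx\wedge dz]$.
   Context: $\mu=\frac12\theta\wedge d\theta$. $\mathfrak X(P,\theta)=\{X: L_X\theta=0\}$ and $\mathfrak X_{\mathrm{ex}}(P,\theta)=\{X\in\mathfrak X(P,\theta): i_X\mu\text{ is exact}\}$. *)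

(* Defs.v *)
(* Concrete model of the 3-torus T^3 = (R/2piZ)^3:
   smooth functions on T^3 are smooth 2pi-periodic functions on R^3;
   vector fields and forms are given by their coefficient functions in the
   global frame dx, dy, dz. *)
From Stdlib Require Import Reals ZArith List.
From Coquelicot Require Import Coquelicot.
Open Scope R_scope.

Inductive coord := cx | cy | cz.

Definition pt := (R * R * R)%type.

Definition get (p : pt) (i : coord) : R :=
  match i with cx => fst (fst p) | cy => snd (fst p) | cz => snd p end.

Definition upd (p : pt) (i : coord) (t : R) : pt :=
  match i with
  | cx => (t, snd (fst p), snd p)
  | cy => (fst (fst p), t, snd p)
  | cz => (fst (fst p), snd (fst p), t)
  end.

Definition partial (i : coord) (f : pt -> R) (p : pt) : R :=
  Derive (fun t => f (upd p i t)) (get p i).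

Fixpoint iter_partial (l : list coord) (f : pt -> R) : pt -> R :=
  match l with nil => f | i :: l' => partial i (iter_partial l' f) end.

Definition smooth (f : pt -> R) : Prop :=
  forall l : list coord,
    (forall p, continuous (iter_partial l f) p) /\
    (forall i p, ex_derive (fun t => iter_partial l f (upd p i t)) (get p i)).

Definition periodic (f : pt -> R) : Prop :=
  forall p i, f (upd p i (get p i + 2 * PI)) = f p.

Definition tfun (f : pt -> R) : Prop := smooth f /\ periodic f.

Definition vfield := coord -> pt -> R.
Definition form1 := coord -> pt -> R.
(* 2-forms w = w cx dy^dz + w cy dz^dx + w cz dx^dy *)
Definition form2 := coord -> pt -> R.
Definition form3 := pt -> R.

Definition is_vf (X : vfield) : Prop := forall i, tfun (X i).
Definition is_form1 (a : form1) : Prop := forall i, tfun (a i).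

Definition sum3 (F : coord -> R) : R := F cx + F cy + F cz.

Definition d1 (a : form1) : form2 := fun i p =>
  match i with
  | cx => partial cy (a cz) p - partial cz (a cy) p
  | cy => partial cz (a cx) p - partial cx (a cz) p
  | cz => partial cx (a cy) p - partial cy (a cx) p
  end.

Definition wedge12 (a : form1) (w : form2) : form3 := fun p =>
  sum3 (fun i => a i p * w i p).

Definition ins1 (X : vfield) (a : form1) : pt -> R := fun p =>
  sum3 (fun i => X i p * a i p).
Definition ins2 (X : vfield) (w : form2) : form1 := fun i p =>
  match i with
  | cx => w cy p * X cz p - w cz p * X cy p
  | cy => w cz p * X cx p - w cx p * X cz p
  | cz => w cx p * X cy p - w cy p * X cx p
  end.
Definition ins3 (X : vfield) (f : form3) : form2 := fun i p => f p * X i p.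

Definition lie1 (X : vfield) (a : form1) : form1 := fun j p =>
  sum3 (fun i => X i p * partial i (a j) p + a i p * partial j (X i) p).

Definition bracket (X Y : vfield) : vfield := fun j p =>
  sum3 (fun i => X i p * partial i (Y j) p - Y i p * partial i (X j) p).

Definition theta : form1 := fun i p =>
  match i with cx => cos (get p cz) | cy => sin (get p cz) | cz => 0 end.
Definition mu : form3 := fun p => / 2 * wedge12 theta (d1 theta) p.

Definition is_contact (a : form1) : Prop :=
  is_form1 a /\ forall p, wedge12 a (d1 a) p <> 0.

Definition exact2 (w : form2) : Prop :=
  exists a : form1, is_form1 a /\ forall i p, w i p = d1 a i p.
Definition strict_contact (X : vfield) : Prop :=
  is_vf X /\ forall j p, lie1 X theta j p = 0.
Definition exact_strict_contact (X : vfield) : Prop :=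
  strict_contact X /\ exact2 (ins3 X mu).

Definition dX : vfield := fun i _ => match i with cx => 1 | _ => 0 end.
Definition dY : vfield := fun i _ => match i with cy => 1 | _ => 0 end.
Definition dydz : form2 := fun i _ => match i with cx => 1 | _ => 0 end.
Definition dxdz : form2 := fun i _ => match i with cy => -1 | _ => 0 end.

Definition vlin (X : vfield) (a b : R) : vfield :=
  fun i p => X i p - a * dX i p - b * dY i p.
Definition flin (w : form2) (a b : R) : form2 :=
  fun i p => w i p - a * dydz i p - b * dxdz i p.

Definition is_reeb (Rb : vfield) : Prop :=
  is_vf Rb /\ (forall p, ins1 Rb theta p = 1) /\
  (forall i p, ins2 Rb (d1 theta) i p = 0).

(* some Reeb orbit is not closed in T^3 (this rules out regularity) *)
Definition has_nonclosed_reeb_orbit : Prop :=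
  forall Rb, is_reeb Rb ->
  exists g : R -> pt,
    (forall t i, is_derive (fun s => get (g s) i) t (Rb i (g t))) /\
    (forall t, t <> 0 -> exists i, forall k : Z,
        get (g t) i - get (g 0) i <> 2 * PI * IZR k).

(* Main.v *)
Require Import Defs.
From Stdlib Require Import Reals ZArith List.
From Coquelicot Require Import Coquelicot.
From Stdlib Require Import Lra Lia Classical FunctionalExtensionality.
Open Scope R_scope.

Lemma cont_pair {U V W : UniformSpace} (f : U -> V) (g : U -> W) x :
  continuous f x -> continuous g x -> continuous (fun t => (f t, g t)) x.
Proof.
  intros Hf Hg. apply (continuous_comp_2 f g pair); auto.
  apply continuous_ext with (f := fun y => y). intros [a b]; reflexivity.
  apply continuous_id.
Qed.

Lemma partial_ext f g i p : (forall q, f q = g q) -> partial i f p = partial i g p.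
Proof. intros H; unfold partial; apply Derive_ext; intros; apply H. Qed.

Lemma iter_partial_app l i f : iter_partial l (partial i f) = iter_partial (l ++ i :: nil) f.
Proof. induction l as [|a l IH]; simpl; [reflexivity| now rewrite IH]. Qed.

Lemma smooth_partial f i : smooth f -> smooth (partial i f).
Proof. intros H l; rewrite iter_partial_app; apply H. Qed.

Lemma smooth_cont f : smooth f -> forall p, continuous f p.
Proof. intros H p; apply (proj1 (H nil)). Qed.

Lemma smooth_exd f : smooth f -> forall i p, ex_derive (fun t => f (upd p i t)) (get p i).
Proof. intros H; apply (proj2 (H nil)). Qed.

Lemma cont_line (G : pt -> R) (h : R -> pt) t :
  continuous h t -> (forall p, continuous G p) -> continuous (fun s => G (h s)) t.
Proof. intros Hh HG. apply (continuous_comp h G t); auto. Qed.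

Lemma cont_x y z t : continuous (fun s : R => ((s, y), z) : pt) t.
Proof. apply cont_pair; [apply cont_pair|]; [apply continuous_id|apply continuous_const|apply continuous_const]. Qed.
Lemma cont_y x z t : continuous (fun s : R => ((x, s), z) : pt) t.
Proof. apply cont_pair; [apply cont_pair|]; [apply continuous_const|apply continuous_id|apply continuous_const]. Qed.
Lemma cont_z x y t : continuous (fun s : R => ((x, y), s) : pt) t.
Proof. apply cont_pair; [apply cont_pair|]; [apply continuous_const|apply continuous_const|apply continuous_id]. Qed.

Lemma cont2_gen (G : pt -> R) (h : R * R -> pt) a b :
  continuous h (a, b) -> (forall p, continuous G p) ->
  continuity_2d_pt (fun u v => G (h (u, v))) a b.
Proof.
  intros Hh HG. apply continuity_2d_pt_filterlim.
  assert (H := continuous_comp h G (a,b) Hh (HG _)).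
  eapply filterlim_ext. 2: apply H. intros [u v]; reflexivity.
Qed.


Lemma cont_xz y a b : continuous (fun w : R * R => ((fst w, y), snd w) : pt) (a, b).
Proof.
  apply cont_pair; [apply cont_pair|].
  apply continuous_fst. apply continuous_const. apply continuous_snd.
Qed.
Lemma cont_yz x a b : continuous (fun w : R * R => ((x, fst w), snd w) : pt) (a, b).
Proof.
  apply cont_pair; [apply cont_pair|].
  apply continuous_const. apply continuous_fst. apply continuous_snd.
Qed.
Lemma cont_xy z a b : continuous (fun w : R * R => ((fst w, snd w), z) : pt) (a, b).
Proof.
  apply cont_pair; [apply cont_pair|].
  apply continuous_fst. apply continuous_snd. apply continuous_const.
Qed.

Lemma comm_xz G p : smooth G -> partial cx (partial cz G) p = partial cz (partial cx G) p.
Proof.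
  intros HG. destruct p as [[x y] z].
  assert (S := Schwarz (fun u v => G ((u, y), v)) x z).
  simpl in S |- *. apply S.
  - exists (mkposreal 1 Rlt_0_1). intros u v _ _.
    repeat split.
    + exact (smooth_exd G HG cx ((u,y),v)).
    + exact (smooth_exd G HG cz ((u,y),v)).
    + exact (smooth_exd _ (smooth_partial G cz HG) cx ((u,y),v)).
    + exact (smooth_exd _ (smooth_partial G cx HG) cz ((u,y),v)).
  - exact (cont2_gen (partial cx (partial cz G)) _ x z (cont_xz y x z)
      (smooth_cont _ (smooth_partial _ cx (smooth_partial G cz HG)))).
  - exact (cont2_gen (partial cz (partial cx G)) _ x z (cont_xz y x z)
      (smooth_cont _ (smooth_partial _ cz (smooth_partial G cx HG)))).
Qed.

Lemma comm_yz G p : smooth G -> partial cy (partial cz G) p = partial cz (partial cy G) p.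
Proof.
  intros HG. destruct p as [[x y] z].
  assert (S := Schwarz (fun u v => G ((x, u), v)) y z).
  simpl in S |- *. apply S.
  - exists (mkposreal 1 Rlt_0_1). intros u v _ _.
    repeat split.
    + exact (smooth_exd G HG cy ((x,u),v)).
    + exact (smooth_exd G HG cz ((x,u),v)).
    + exact (smooth_exd _ (smooth_partial G cz HG) cy ((x,u),v)).
    + exact (smooth_exd _ (smooth_partial G cy HG) cz ((x,u),v)).
  - exact (cont2_gen (partial cy (partial cz G)) _ y z (cont_yz x y z)
      (smooth_cont _ (smooth_partial _ cy (smooth_partial G cz HG)))).
  - exact (cont2_gen (partial cz (partial cy G)) _ y z (cont_yz x y z)
      (smooth_cont _ (smooth_partial _ cz (smooth_partial G cy HG)))).
Qed.

Lemma comm_xy G p : smooth G -> partial cx (partial cy G) p = partial cy (partial cx G) p.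
Proof.
  intros HG. destruct p as [[x y] z].
  assert (S := Schwarz (fun u v => G ((u, v), z)) x y).
  simpl in S |- *. apply S.
  - exists (mkposreal 1 Rlt_0_1). intros u v _ _.
    repeat split.
    + exact (smooth_exd G HG cx ((u,v),z)).
    + exact (smooth_exd G HG cy ((u,v),z)).
    + exact (smooth_exd _ (smooth_partial G cy HG) cx ((u,v),z)).
    + exact (smooth_exd _ (smooth_partial G cx HG) cy ((u,v),z)).
  - exact (cont2_gen (partial cx (partial cy G)) _ x y (cont_xy z x y)
      (smooth_cont _ (smooth_partial _ cx (smooth_partial G cy HG)))).
  - exact (cont2_gen (partial cy (partial cx G)) _ x y (cont_xy z x y)
      (smooth_cont _ (smooth_partial _ cy (smooth_partial G cx HG)))).
Qed.

Lemma mvt1 (f : R -> R) a b :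
  (forall w, ex_derive f w) ->
  exists c, Rmin a b <= c <= Rmax a b /\ f b - f a = Derive f c * (b - a).
Proof.
  intros H. apply (MVT_gen f a b (Derive f)).
  - intros w _. apply Derive_correct, H.
  - intros w _. apply continuity_pt_filterlim. exact (ex_derive_continuous f w (H w)).
Qed.

Lemma rmin_max_close a b c d : Rmin a b <= c <= Rmax a b -> Rabs (b - a) < d -> Rabs (c - a) < d.
Proof.
  intros [H1 H2] H. unfold Rmin, Rmax in *. destruct (Rle_dec a b);
  apply Rabs_def2 in H; destruct H; apply Rabs_def1; lra.
Qed.

Lemma diff_C1 (F : R -> R -> R) x y :
  (forall u v, ex_derive (fun w => F w v) u) ->
  (forall u v, ex_derive (fun w => F u w) v) ->
  continuity_2d_pt (fun u v => Derive (fun w => F w v) u) x y ->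
  continuity_2d_pt (fun u v => Derive (fun w => F u w) v) x y ->
  differentiable_pt_lim F x y (Derive (fun w => F w y) x) (Derive (fun w => F x w) y).
Proof.
  intros H1 H2 C1 C2 eps.
  assert (He : 0 < eps / 2) by (destruct eps; simpl; lra).
  destruct (C1 (mkposreal _ He)) as [d1 Hd1].
  destruct (C2 (mkposreal _ He)) as [d2 Hd2].
  assert (Hd : 0 < Rmin d1 d2) by (apply Rmin_pos; [destruct d1|destruct d2]; auto).
  exists (mkposreal _ Hd). simpl. intros u v Hu Hv.
  assert (Hu1 : Rabs (u - x) < d1) by (eapply Rlt_le_trans; [apply Hu|apply Rmin_l]).
  assert (Hu2 : Rabs (u - x) < d2) by (eapply Rlt_le_trans; [apply Hu|apply Rmin_r]).
  assert (Hv1 : Rabs (v - y) < d1) by (eapply Rlt_le_trans; [apply Hv|apply Rmin_l]).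
  assert (Hv2 : Rabs (v - y) < d2) by (eapply Rlt_le_trans; [apply Hv|apply Rmin_r]).
  destruct (mvt1 (fun w => F w v) x u (fun w => H1 w v)) as [xi [Hxi Exi]].
  destruct (mvt1 (fun w => F x w) y v (fun w => H2 x w)) as [eta [Heta Eeta]].
  assert (A1 : Rabs (Derive (fun w => F w v) xi - Derive (fun w => F w y) x) < eps/2).
  { apply (Hd1 xi v). eapply rmin_max_close; eauto. auto. }
  assert (A2 : Rabs (Derive (fun w => F x w) eta - Derive (fun w => F x w) y) < eps/2).
  { apply (Hd2 x eta). rewrite Rminus_diag, Rabs_R0. destruct d2; auto.
    eapply rmin_max_close; eauto. }
  replace (F u v - F x y - (Derive (fun w => F w y) x * (u - x) + Derive (fun w => F x w) y * (v - y)))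
    with ((Derive (fun w => F w v) xi - Derive (fun w => F w y) x) * (u - x)
          + (Derive (fun w => F x w) eta - Derive (fun w => F x w) y) * (v - y)) by lra.
  eapply Rle_trans. apply Rabs_triang. rewrite !Rabs_mult.
  assert (M1 := Rmax_l (Rabs (u - x)) (Rabs (v - y))).
  assert (M2 := Rmax_r (Rabs (u - x)) (Rabs (v - y))).
  assert (P1 := Rabs_pos (u - x)). assert (P2 := Rabs_pos (v - y)).
  assert (Q1 := Rabs_pos (Derive (fun w => F w v) xi - Derive (fun w => F w y) x)).
  assert (Q2 := Rabs_pos (Derive (fun w => F x w) eta - Derive (fun w => F x w) y)).
  set (m := Rmax (Rabs (u - x)) (Rabs (v - y))) in *.
  apply Rle_trans with (eps/2 * m + eps/2 * m); [|lra].
  apply Rplus_le_compat; apply Rmult_le_compat; lra.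
Qed.

Lemma chain2 (F : R -> R -> R) a b c s t0 :
  (forall u v, ex_derive (fun w => F w v) u) ->
  (forall u v, ex_derive (fun w => F u w) v) ->
  (forall u v, continuity_2d_pt (fun u v => Derive (fun w => F w v) u) u v) ->
  (forall u v, continuity_2d_pt (fun u v => Derive (fun w => F u w) v) u v) ->
  is_derive (fun t => F (a + c*t) (b + s*t)) t0
    (c * Derive (fun w => F w (b+s*t0)) (a+c*t0) + s * Derive (fun w => F (a+c*t0) w) (b+s*t0)).
Proof.
  intros H1 H2 C1 C2. apply is_derive_Reals.
  replace (c * Derive (fun w => F w (b+s*t0)) (a+c*t0) + s * Derive (fun w => F (a+c*t0) w) (b+s*t0))
    with (Derive (fun w => F w (b+s*t0)) (a+c*t0) * c + Derive (fun w => F (a+c*t0) w) (b+s*t0) * s) by ring.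
  apply (derivable_pt_lim_comp_2d F (fun t => a + c*t) (fun t => b + s * t)).
  - apply diff_C1; auto.
  - apply is_derive_Reals. auto_derive; auto; ring.
  - apply is_derive_Reals. auto_derive; auto; ring.
Qed.

Lemma Derive_cos' z : Derive cos z = - sin z.
Proof. apply is_derive_unique, is_derive_cos. Qed.
Lemma Derive_sin' z : Derive sin z = cos z.
Proof. apply is_derive_unique, is_derive_sin. Qed.

Lemma pth x y z i j : partial i (theta j) ((x,y),z) =
  match i, j with
  | cz, cx => - sin z
  | cz, cy => cos z
  | _, _ => 0 end.
Proof.
  unfold partial. destruct i, j; simpl;
  first [ apply Derive_const | apply Derive_cos' | apply Derive_sin' ].
Qed.

Lemma lie1_x X x y z : lie1 X theta cx ((x,y),z) =
  - sin z * X cz ((x,y),z) + cos z * partial cx (X cx) ((x,y),z) + sin z * partial cx (X cy) ((x,y),z).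
Proof. unfold lie1, sum3. rewrite !pth. simpl. ring. Qed.
Lemma lie1_y X x y z : lie1 X theta cy ((x,y),z) =
  cos z * X cz ((x,y),z) + cos z * partial cy (X cx) ((x,y),z) + sin z * partial cy (X cy) ((x,y),z).
Proof. unfold lie1, sum3. rewrite !pth. simpl. ring. Qed.
Lemma lie1_z X x y z : lie1 X theta cz ((x,y),z) =
  cos z * partial cz (X cx) ((x,y),z) + sin z * partial cz (X cy) ((x,y),z).
Proof. unfold lie1, sum3. rewrite !pth. simpl. ring. Qed.

Lemma partial_zero (P : pt -> R) i p : (forall q, P q = 0) -> partial i P p = 0.
Proof. intros H. rewrite (partial_ext P (fun _ => 0)) by auto. unfold partial; apply Derive_const. Qed.

Lemma deriv3 (a b c g1 g2 g3 : R -> R) a' b' c' z :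
  is_derive a z a' -> is_derive b z b' -> is_derive c z c' ->
  ex_derive g1 z -> ex_derive g2 z -> ex_derive g3 z ->
  is_derive (fun t => a t * g1 t + b t * g2 t + c t * g3 t) z
   (a' * g1 z + a z * Derive g1 z + (b' * g2 z + b z * Derive g2 z) + (c' * g3 z + c z * Derive g3 z)).
Proof.
  intros Ha Hb Hc H1 H2 H3.
  assert (Ea := is_derive_unique _ _ _ Ha). assert (Eb := is_derive_unique _ _ _ Hb).
  assert (Ec := is_derive_unique _ _ _ Hc).
  auto_derive.
  - repeat split; auto; eexists; eauto.
  - change (fun x : R => a x) with a; change (fun x : R => b x) with b; change (fun x : R => c x) with c;
    change (fun x : R => g1 x) with g1; change (fun x : R => g2 x) with g2; change (fun x : R => g3 x) with g3.
    rewrite Ea, Eb, Ec. ring.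
Qed.

Lemma dsin z : is_derive (fun t => - sin t) z (- cos z).
Proof. auto_derive; auto; ring. Qed.
Lemma dcos z : is_derive (fun t => cos t) z (- sin z).
Proof. auto_derive; auto; ring. Qed.
Lemma dsin' z : is_derive (fun t => sin t) z (cos z).
Proof. auto_derive; auto; ring. Qed.

Section Strict.
Variable X : vfield.
Hypothesis HX : strict_contact X.

Let Xs i : smooth (X i) := proj1 (proj1 HX i).
Let ed A i p (H : smooth A) := smooth_exd A H i p.

Lemma Ex x y z : - sin z * X cz ((x,y),z) + cos z * partial cx (X cx) ((x,y),z) + sin z * partial cx (X cy) ((x,y),z) = 0.
Proof. rewrite <- lie1_x. apply (proj2 HX). Qed.
Lemma Ey x y z : cos z * X cz ((x,y),z) + cos z * partial cy (X cx) ((x,y),z) + sin z * partial cy (X cy) ((x,y),z) = 0.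
Proof. rewrite <- lie1_y. apply (proj2 HX). Qed.
Lemma Ez x y z : cos z * partial cz (X cx) ((x,y),z) + sin z * partial cz (X cy) ((x,y),z) = 0.
Proof. rewrite <- lie1_z. apply (proj2 HX). Qed.

Lemma dzEx x y z :
  - cos z * X cz ((x,y),z) - sin z * partial cz (X cz) ((x,y),z)
  - sin z * partial cx (X cx) ((x,y),z) + cos z * partial cz (partial cx (X cx)) ((x,y),z)
  + cos z * partial cx (X cy) ((x,y),z) + sin z * partial cz (partial cx (X cy)) ((x,y),z) = 0.
Proof.
  assert (H0 : Derive (fun t => - sin t * X cz ((x,y),t) + cos t * partial cx (X cx) ((x,y),t) + sin t * partial cx (X cy) ((x,y),t)) z = 0).
  { rewrite (Derive_ext _ (fun _ => 0)). apply Derive_const. intros t; apply Ex. }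
  assert (E1 := ed (X cz) cz ((x,y),z) (Xs cz)).
  assert (E2 := ed _ cz ((x,y),z) (smooth_partial _ cx (Xs cx))).
  assert (E3 := ed _ cz ((x,y),z) (smooth_partial _ cx (Xs cy))).
  simpl in E1, E2, E3.
  assert (D := deriv3 (fun t => - sin t) cos sin (fun t => X cz ((x,y),t)) (fun t => partial cx (X cx) ((x,y),t))
     (fun t => partial cx (X cy) ((x,y),t)) _ _ _ z (dsin z) (dcos z) (dsin' z) E1 E2 E3).
  apply is_derive_unique in D. cbv beta in D. rewrite <- H0.
  change (Derive (fun t : R => X cz (x, y, t)) z) with (partial cz (X cz) ((x,y),z)) in D.
  change (Derive (fun t : R => partial cx (X cx) (x, y, t)) z) with (partial cz (partial cx (X cx)) ((x,y),z)) in D.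
  change (Derive (fun t : R => partial cx (X cy) (x, y, t)) z) with (partial cz (partial cx (X cy)) ((x,y),z)) in D.
  etransitivity; [|symmetry; exact D]. ring.
Qed.
End Strict.

Lemma upd_get p i : upd p i (get p i) = p.
Proof. destruct p as [[x y] z]; destruct i; reflexivity. Qed.
Lemma get_upd p i t : get (upd p i t) i = t.
Proof. destruct p as [[x y] z]; destruct i; reflexivity. Qed.
Lemma upd_upd p i s t : upd (upd p i s) i t = upd p i t.
Proof. destruct p as [[x y] z]; destruct i; reflexivity. Qed.

Lemma d_lin3 i p (a b c : R -> R) a' b' c' (A B C : pt -> R) :
  smooth A -> smooth B -> smooth C ->
  is_derive (fun t => a (get (upd p i t) cz)) (get p i) a' ->
  is_derive (fun t => b (get (upd p i t) cz)) (get p i) b' ->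
  is_derive (fun t => c (get (upd p i t) cz)) (get p i) c' ->
  (forall q, a (get q cz) * A q + b (get q cz) * B q + c (get q cz) * C q = 0) ->
  a' * A p + a (get p cz) * partial i A p + (b' * B p + b (get p cz) * partial i B p)
  + (c' * C p + c (get p cz) * partial i C p) = 0.
Proof.
  intros HA HB HC Ha Hb Hc H.
  assert (D := deriv3 _ _ _ (fun t => A (upd p i t)) (fun t => B (upd p i t)) (fun t => C (upd p i t))
     _ _ _ _ Ha Hb Hc (smooth_exd A HA i p) (smooth_exd B HB i p) (smooth_exd C HC i p)).
  apply is_derive_unique in D.
  rewrite (Derive_ext _ (fun _ => 0)) in D by (intros; apply H).
  rewrite Derive_const in D. rewrite upd_get in D. unfold partial. rewrite D. reflexivity.
Qed.

Lemma dconst z t : is_derive (fun _ : R => z) t 0.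
Proof. auto_derive; auto. Qed.

Lemma deriv3v (a b c g1 g2 g3 : R -> R) a' b' c' d1 d2 d3 z :
  is_derive a z a' -> is_derive b z b' -> is_derive c z c' ->
  is_derive g1 z d1 -> is_derive g2 z d2 -> is_derive g3 z d3 ->
  is_derive (fun t => a t * g1 t + b t * g2 t + c t * g3 t) z
   (a' * g1 z + a z * d1 + (b' * g2 z + b z * d2) + (c' * g3 z + c z * d3)).
Proof.
  intros Ha Hb Hc H1 H2 H3.
  assert (D := deriv3 a b c g1 g2 g3 a' b' c' z Ha Hb Hc (ex_intro _ _ H1) (ex_intro _ _ H2) (ex_intro _ _ H3)).
  rewrite (is_derive_unique _ _ _ H1), (is_derive_unique _ _ _ H2), (is_derive_unique _ _ _ H3) in D.
  exact D.
Qed.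

Lemma is_derive_val (f : R -> R) z l l' : is_derive f z l -> l = l' -> is_derive f z l'.
Proof. intros H ->; exact H. Qed.

Lemma per1_nat (g : R -> R) : (forall t, g (t + 2*PI) = g t) ->
  forall (n : nat) t, g (t + 2*PI*INR n) = g t.
Proof.
  intros H n. induction n as [|n IH]; intros t.
  - simpl. f_equal. ring.
  - rewrite S_INR. replace (t + 2*PI*(INR n + 1)) with ((t + 2*PI*INR n) + 2*PI) by ring.
    rewrite H. apply IH.
Qed.

Lemma per1_int (g : R -> R) : (forall t, g (t + 2*PI) = g t) ->
  forall (k : Z) t, g (t + 2*PI*IZR k) = g t.
Proof.
  intros H k t. destruct (Z_le_gt_dec 0 k) as [Hk|Hk].
  - rewrite <- (Z2Nat.id k) by lia. rewrite <- INR_IZR_INZ. apply per1_nat; auto.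
  - assert (E : IZR k = - INR (Z.to_nat (- k))).
    { rewrite INR_IZR_INZ, Z2Nat.id by lia. rewrite opp_IZR. ring. }
    rewrite E. set (t' := t + 2 * PI * - INR (Z.to_nat (- k))).
    assert (H2 := per1_nat g H (Z.to_nat (-k)) t').
    replace (t' + 2*PI*INR (Z.to_nat (-k))) with t in H2 by (unfold t'; ring).
    auto.
Qed.

Lemma periodic_line f p i : periodic f -> forall t, f (upd p i (t + 2*PI)) = f (upd p i t).
Proof.
  intros H t. rewrite <- (H (upd p i t) i). rewrite upd_upd, get_upd. reflexivity.
Qed.

Lemma periodic_int f p i (k : Z) : periodic f -> f (upd p i (get p i + 2*PI*IZR k)) = f p.
Proof.
  intros H. rewrite (per1_int (fun t => f (upd p i t))). apply f_equal, upd_get.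
  apply periodic_line; auto.
Qed.

Lemma reduce_2pi (t : R) : exists k : Z, 0 <= t - 2*PI*IZR k <= 2*PI.
Proof.
  assert (HP := PI_RGT_0).
  destruct (archimed (t / (2*PI))) as [H1 H2].
  exists (up (t / (2*PI)) - 1)%Z. rewrite minus_IZR.
  set (u := IZR (up (t / (2 * PI)))) in *.
  assert (E : t = 2*PI * (t / (2*PI))) by (field; lra).
  split.
  - assert (u - 1 <= t / (2*PI)) by lra.
    apply Rmult_le_compat_l with (r := 2*PI) in H; lra.
  - apply Rmult_lt_compat_l with (r := 2*PI) in H1; lra.
Qed.

Lemma bound1 (g : R -> R) : (forall t, continuity_pt g t) -> (forall t, g (t + 2*PI) = g t) ->
  exists M, forall t, Rabs (g t) <= M.
Proof.
  intros Hc Hp.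
  assert (HP := PI_RGT_0).
  destruct (continuity_ab_maj (fun t => Rabs (g t)) 0 (2*PI)) as [m [Hm _]].
  lra. intros c _. apply continuity_pt_comp with (f1 := g) (f2 := Rabs); auto.
  apply Rcontinuity_abs.
  exists (Rabs (g m)). intros t.
  destruct (reduce_2pi t) as [k Hk].
  assert (E : g t = g (t - 2*PI*IZR k)).
  { rewrite <- (per1_int g Hp k (t - 2*PI*IZR k)). f_equal; ring. }
  rewrite E. apply Hm. lra.
Qed.

Lemma deriv0_const (f : R -> R) : (forall t, is_derive f t 0) -> forall a b, f a = f b.
Proof.
  intros H a b.
  destruct (MVT_gen f a b (fun _ => 0)) as [c [_ Hc]].
  - intros; apply H.
  - intros t _. apply continuity_pt_filterlim. exact (ex_derive_continuous f t (ex_intro _ 0 (H t))).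
  - lra.
Qed.

Lemma lin_unbounded (kap T B : R) : T <> 0 -> (forall n : nat, Rabs (kap * (INR n * T)) <= B) -> kap = 0.
Proof.
  intros HT H. destruct (Req_dec kap 0) as [|Hk]; auto. exfalso.
  assert (HB : 0 <= B) by (specialize (H 0%nat); simpl in H; eapply Rle_trans; [apply Rabs_pos|apply H]).
  assert (Ha : 0 < Rabs (kap * T)) by (apply Rabs_pos_lt; apply Rmult_integral_contrapositive; auto).
  set (r := B / Rabs (kap * T)).
  assert (Hr : 0 <= r) by (unfold r; apply Rdiv_le_0_compat; lra).
  destruct (archimed r) as [H1 _].
  assert (Hu : (0 <= up r)%Z) by (apply le_IZR; lra).
  specialize (H (Z.to_nat (up r))).
  rewrite INR_IZR_INZ, Z2Nat.id in H by auto.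
  replace (kap * (IZR (up r) * T)) with (IZR (up r) * (kap * T)) in H by ring.
  rewrite Rabs_mult, (Rabs_right (IZR (up r))) in H by lra.
  assert (r * Rabs (kap * T) = B) by (unfold r; field; lra).
  assert (IZR (up r) * Rabs (kap * T) > r * Rabs (kap * T)) by (apply Rmult_gt_compat_r; lra).
  lra.
Qed.

Lemma dcx (a : R -> R) p : is_derive (fun t => a (get (upd p cx t) cz)) (get p cx) 0.
Proof. destruct p as [[x y] z]. simpl. apply dconst. Qed.
Lemma dcy (a : R -> R) p : is_derive (fun t => a (get (upd p cy t) cz)) (get p cy) 0.
Proof. destruct p as [[x y] z]. simpl. apply dconst. Qed.

Lemma dcz (a : R -> R) a' p : is_derive a (get p cz) a' -> is_derive (fun t => a (get (upd p cz t) cz)) (get p cz) a'.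
Proof. destruct p as [[x y] z]. simpl. auto. Qed.

Section S.
Variable X : vfield.
Hypothesis HX : strict_contact X.
Let Xs i : smooth (X i) := proj1 (proj1 HX i).
Let Ps i j : smooth (partial j (X i)) := smooth_partial _ j (Xs i).

Lemma idA x y z :
  - sin z * partial cx (X cx) ((x,y),z) + cos z * partial cx (X cy) ((x,y),z)
  = cos z * X cz ((x,y),z) + sin z * partial cz (X cz) ((x,y),z).
Proof.
  assert (H1 := dzEx X HX x y z).
  assert (H2 := d_lin3 cx ((x,y),z) cos sin (fun _ => 0) 0 0 0 _ _ _ (Ps cx cz) (Ps cy cz) (Xs cz)
     (dcx _ _) (dcx _ _) (dcx _ _)).
  simpl in H2.
  rewrite (comm_xz (X cx)), (comm_xz (X cy)) in H2 by apply Xs.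
  assert (H3 : forall q, cos (get q cz) * partial cz (X cx) q + sin (get q cz) * partial cz (X cy) q + 0 * X cz q = 0).
  { intros [[a b] c]. simpl. rewrite Rmult_0_l, Rplus_0_r. apply Ez; auto. }
  specialize (H2 H3). nra.
Qed.

Lemma idB x y z :
  - sin z * partial cy (X cx) ((x,y),z) + cos z * partial cy (X cy) ((x,y),z)
  = sin z * X cz ((x,y),z) - cos z * partial cz (X cz) ((x,y),z).
Proof.
  assert (H1 := d_lin3 cz ((x,y),z) cos cos sin _ _ _ _ _ _ (Xs cz) (Ps cx cy) (Ps cy cy)
     (dcz _ _ _ (dcos _)) (dcz _ _ _ (dcos _)) (dcz _ _ _ (dsin' _))).
  assert (H2 := d_lin3 cy ((x,y),z) cos sin (fun _ => 0) 0 0 0 _ _ _ (Ps cx cz) (Ps cy cz) (Xs cz)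
     (dcy _ _) (dcy _ _) (dcy _ _)).
  simpl in H1, H2.
  rewrite (comm_yz (X cx)), (comm_yz (X cy)) in H2 by apply Xs.
  assert (H3 : forall q, cos (get q cz) * partial cz (X cx) q + sin (get q cz) * partial cz (X cy) q + 0 * X cz q = 0).
  { intros [[a b] c]. simpl. rewrite Rmult_0_l, Rplus_0_r. apply Ez; auto. }
  assert (H4 : forall q, cos (get q cz) * X cz q + cos (get q cz) * partial cy (X cx) q + sin (get q cz) * partial cy (X cy) q = 0).
  { intros [[a b] c]. simpl. apply Ey; auto. }
  specialize (H2 H3). specialize (H1 H4). nra.
Qed.

Lemma idC x y z :
  cos z * partial cx (X cz) ((x,y),z) + sin z * partial cy (X cz) ((x,y),z) = 0.
Proof.
  assert (H1 := d_lin3 cy ((x,y),z) (fun t => - sin t) cos sin 0 0 0 _ _ _ (Xs cz) (Ps cx cx) (Ps cy cx)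
     (dcy _ _) (dcy _ _) (dcy _ _)).
  assert (H2 := d_lin3 cx ((x,y),z) cos cos sin 0 0 0 _ _ _ (Xs cz) (Ps cx cy) (Ps cy cy)
     (dcx _ _) (dcx _ _) (dcx _ _)).
  simpl in H1, H2.
  rewrite (comm_xy (X cx)), (comm_xy (X cy)) in H2 by apply Xs.
  assert (H3 : forall q, - sin (get q cz) * X cz q + cos (get q cz) * partial cx (X cx) q + sin (get q cz) * partial cx (X cy) q = 0).
  { intros [[a b] c]. simpl. apply Ex; auto. }
  assert (H4 : forall q, cos (get q cz) * X cz q + cos (get q cz) * partial cy (X cx) q + sin (get q cz) * partial cy (X cy) q = 0).
  { intros [[a b] c]. simpl. apply Ey; auto. }
  specialize (H1 H3). specialize (H2 H4). nra.
Qed.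
End S.

Lemma chain_slice G z x0 y0 c s t : smooth G ->
  is_derive (fun t => G ((x0 + c*t, y0 + s*t), z)) t
    (c * partial cx G ((x0+c*t, y0+s*t), z) + s * partial cy G ((x0+c*t, y0+s*t), z)).
Proof.
  intros HG.
  apply (chain2 (fun u v => G ((u,v),z)) x0 y0 c s t).
  - intros u v. exact (smooth_exd G HG cx ((u,v),z)).
  - intros u v. exact (smooth_exd G HG cy ((u,v),z)).
  - intros u v. exact (cont2_gen (partial cx G) _ u v (cont_xy z u v) (smooth_cont _ (smooth_partial G cx HG))).
  - intros u v. exact (cont2_gen (partial cy G) _ u v (cont_xy z u v) (smooth_cont _ (smooth_partial G cy HG))).
Qed.

Lemma cont_pt_slice_y G x z : smooth G -> forall t, continuity_pt (fun s => G ((x, s), z)) t.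
Proof.
  intros HG t. apply continuity_pt_filterlim.
  exact (cont_line G (fun s => ((x,s),z)) t (cont_y x z t) (smooth_cont G HG)).
Qed.
Lemma cont_pt_slice_x G y z : smooth G -> forall t, continuity_pt (fun s => G ((s, y), z)) t.
Proof.
  intros HG t. apply continuity_pt_filterlim.
  exact (cont_line G (fun s => ((s,y),z)) t (cont_x y z t) (smooth_cont G HG)).
Qed.

Lemma bound_y G x z : tfun G -> exists M, forall y, Rabs (G ((x,y),z)) <= M.
Proof.
  intros [HG HP]. apply bound1. apply cont_pt_slice_y; auto.
  intros t. exact (HP ((x,t),z) cy).
Qed.
Lemma bound_x G y z : tfun G -> exists M, forall x, Rabs (G ((x,y),z)) <= M.
Proof.
  intros [HG HP]. apply bound1. apply cont_pt_slice_x; auto.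
  intros t. exact (HP ((t,y),z) cx).
Qed.

Section S.
Variable X : vfield.
Hypothesis HX : strict_contact X.
Let Xs i : smooth (X i) := proj1 (proj1 HX i).
Let Xp i : periodic (X i) := proj2 (proj1 HX i).

Lemma Xz_zero p : X cz p = 0.
Proof.
  destruct p as [[x0 y0] z].
  set (c := cos z). set (s := sin z).
  set (kap := X cz ((x0,y0),z)).
  assert (Hcs : c*c + s*s = 1) by (unfold c, s; rewrite Rplus_comm; rewrite <- (sin2_cos2 z); unfold Rsqr; ring).
  set (L := fun t => ((x0 + c*t, y0 + s*t), z) : pt).
  assert (HL0 : L 0 = ((x0,y0),z)) by (unfold L; f_equal; f_equal; ring).
  assert (HK : forall t, X cz (L t) = kap).
  { intros t. unfold kap. rewrite <- HL0.
    apply (deriv0_const (fun t => X cz (L t))). intros t'.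
    assert (D := chain_slice (X cz) z x0 y0 c s t' (Xs cz)).
    unfold c, s in D. rewrite idC in D; auto. }
  set (Hf := fun t => - s * X cx (L t) + c * X cy (L t)).
  assert (HH : forall t, Hf t = Hf 0 + kap * t).
  { intros t.
    assert (E : forall t, Hf t - kap * t = Hf 0 - kap * 0).
    { intros t1. apply (deriv0_const (fun t => Hf t - kap * t)). intros t'.
      assert (D1 : is_derive (fun t => X cx (L t)) t' (c * partial cx (X cx) (L t') + s * partial cy (X cx) (L t')))
        by exact (chain_slice (X cx) z x0 y0 c s t' (Xs cx)).
      assert (D2 : is_derive (fun t => X cy (L t)) t' (c * partial cx (X cy) (L t') + s * partial cy (X cy) (L t')))
        by exact (chain_slice (X cy) z x0 y0 c s t' (Xs cy)).
      assert (D := deriv3v (fun _ => - s) (fun _ => c) (fun _ => - kap) (fun t => X cx (L t)) (fun t => X cy (L t)) (fun t => t)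
         0 0 0 _ _ 1 t' (dconst _ _) (dconst _ _) (dconst _ _) D1 D2 (is_derive_id _)).
      eapply is_derive_ext; [|eapply is_derive_val; [apply D|]]. intros t2; simpl. unfold Hf. ring.
      assert (A := idA X HX (x0+c*t') (y0+s*t') z).
      assert (B := idB X HX (x0+c*t') (y0+s*t') z).
      assert (K := HK t'). unfold L in *. unfold c, s in *.
      set (P := (x0 + cos z * t', y0 + sin z * t', z)) in *.
      rewrite <- K.
      apply (f_equal (Rmult (cos z))) in A. apply (f_equal (Rmult (sin z))) in B.
      assert (Hcs' : (cos z * cos z + sin z * sin z - 1) * X cz P = 0) by (rewrite Hcs; ring).
      lra. }
    specialize (E t). lra. }
  assert (Hs1 : Rabs s <= 1) by (unfold s; apply Rabs_le; split; [apply SIN_bound|apply SIN_bound]).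
  assert (Hc1 : Rabs c <= 1) by (unfold c; apply Rabs_le; split; [apply COS_bound|apply COS_bound]).
  assert (HP := PI_RGT_0).
  destruct (Req_dec c 0) as [Hc0|Hc0].
  - assert (Hs0 : s <> 0) by (intro Hs; rewrite Hs, Hc0 in Hcs; lra).
    destruct (bound_x (X cx) y0 z (proj1 HX cx)) as [M1 HM1].
    destruct (bound_x (X cy) y0 z (proj1 HX cy)) as [M2 HM2].
    apply (lin_unbounded kap (2*PI/s) (M1 + M2 + Rabs (Hf 0))).
    + unfold Rdiv; apply Rmult_integral_contrapositive; split; [lra|apply Rinv_neq_0_compat; auto].
    + intros n. set (t := INR n * (2*PI/s)).
      assert (Et : L t = upd ((x0 + c*t, y0), z) cy (get ((x0 + c*t, y0), z) cy + 2*PI*IZR (Z.of_nat n))).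
      { unfold L, t; simpl. rewrite <- INR_IZR_INZ. f_equal. f_equal. field; auto. }
      replace (kap * t) with (Hf t - Hf 0) by (rewrite (HH t); ring).
      unfold Hf at 1. rewrite Et, !periodic_int by apply Xp.
      assert (A1 := HM1 (x0 + c*t)). assert (A2 := HM2 (x0 + c*t)).
      eapply Rle_trans. apply Rabs_triang. rewrite Rabs_Ropp.
      apply Rplus_le_compat_r. eapply Rle_trans. apply Rabs_triang.
      rewrite !Rabs_mult, Rabs_Ropp. apply Rplus_le_compat.
      * apply Rle_trans with (1 * M1); [apply Rmult_le_compat; auto using Rabs_pos|lra].
      * apply Rle_trans with (1 * M2); [apply Rmult_le_compat; auto using Rabs_pos|lra].
  - destruct (bound_y (X cx) x0 z (proj1 HX cx)) as [M1 HM1].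
    destruct (bound_y (X cy) x0 z (proj1 HX cy)) as [M2 HM2].
    apply (lin_unbounded kap (2*PI/c) (M1 + M2 + Rabs (Hf 0))).
    + unfold Rdiv; apply Rmult_integral_contrapositive; split; [lra|apply Rinv_neq_0_compat; auto].
    + intros n. set (t := INR n * (2*PI/c)).
      assert (Et : L t = upd ((x0, y0 + s*t), z) cx (get ((x0, y0 + s*t), z) cx + 2*PI*IZR (Z.of_nat n))).
      { unfold L, t; simpl. rewrite <- INR_IZR_INZ. f_equal. f_equal. field; auto. }
      replace (kap * t) with (Hf t - Hf 0) by (rewrite (HH t); ring).
      unfold Hf at 1. rewrite Et, !periodic_int by apply Xp.
      assert (A1 := HM1 (y0 + s*t)). assert (A2 := HM2 (y0 + s*t)).
      eapply Rle_trans. apply Rabs_triang. rewrite Rabs_Ropp.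
      apply Rplus_le_compat_r. eapply Rle_trans. apply Rabs_triang.
      rewrite !Rabs_mult, Rabs_Ropp. apply Rplus_le_compat.
      * apply Rle_trans with (1 * M1); [apply Rmult_le_compat; auto using Rabs_pos|lra].
      * apply Rle_trans with (1 * M2); [apply Rmult_le_compat; auto using Rabs_pos|lra].
Qed.

End S.

Lemma partial_to_is_derive G i p : smooth G -> is_derive (fun t => G (upd p i t)) (get p i) (partial i G p).
Proof. intros H. apply Derive_correct, smooth_exd, H. Qed.

Section S.
Variable X : vfield.
Hypothesis HX : strict_contact X.
Let Xs i : smooth (X i) := proj1 (proj1 HX i).

Lemma dXz p : partial cz (X cz) p = 0.
Proof. apply partial_zero. apply Xz_zero; auto. Qed.

Lemma dx_zero x y z : partial cx (X cx) ((x,y),z) = 0 /\ partial cx (X cy) ((x,y),z) = 0.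
Proof.
  assert (A := idA X HX x y z). assert (E := Ex X HX x y z).
  rewrite dXz, Xz_zero in A by auto. rewrite Xz_zero in E by auto.
  assert (H := sin2_cos2 z). unfold Rsqr in H.
  set (a := partial cx (X cx) ((x,y),z)) in *. set (b := partial cx (X cy) ((x,y),z)) in *.
  split.
  - replace a with (cos z * (- sin z * 0 + cos z * a + sin z * b) - sin z * (- sin z * a + cos z * b)) by (symmetry; rewrite <- (Rmult_1_l a) at 1; rewrite <- H; ring).
    rewrite A, E. ring.
  - replace b with (sin z * (- sin z * 0 + cos z * a + sin z * b) + cos z * (- sin z * a + cos z * b)) by (symmetry; rewrite <- (Rmult_1_l b) at 1; rewrite <- H; ring).
    rewrite A, E. ring.
Qed.

Lemma dy_zero x y z : partial cy (X cx) ((x,y),z) = 0 /\ partial cy (X cy) ((x,y),z) = 0.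
Proof.
  assert (A := idB X HX x y z). assert (E := Ey X HX x y z).
  rewrite dXz, Xz_zero in A by auto. rewrite Xz_zero in E by auto.
  assert (H := sin2_cos2 z). unfold Rsqr in H.
  set (a := partial cy (X cx) ((x,y),z)) in *. set (b := partial cy (X cy) ((x,y),z)) in *.
  split.
  - replace a with (cos z * (cos z * 0 + cos z * a + sin z * b) - sin z * (- sin z * a + cos z * b)) by (symmetry; rewrite <- (Rmult_1_l a) at 1; rewrite <- H; ring).
    rewrite A, E. ring.
  - replace b with (sin z * (cos z * 0 + cos z * a + sin z * b) + cos z * (- sin z * a + cos z * b)) by (symmetry; rewrite <- (Rmult_1_l b) at 1; rewrite <- H; ring).
    rewrite A, E. ring.
Qed.

Lemma X_of_z i x y z : X i ((x,y),z) = X i ((0,0),z).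
Proof.
  assert (K : forall j, j <> cz -> X j ((x,y),z) = X j ((0,0),z)).
  { clear i. intros i Hi.
    assert (Dx : forall t y', partial cx (X i) ((t,y'),z) = 0) by (intros; destruct i; [apply dx_zero|apply dx_zero|congruence]).
    assert (Dy : forall t x', partial cy (X i) ((x',t),z) = 0) by (intros; destruct i; [apply dy_zero|apply dy_zero|congruence]).
    transitivity (X i ((0,y),z)).
    - apply (deriv0_const (fun t => X i ((t,y),z))); intros t.
      eapply is_derive_val; [exact (partial_to_is_derive _ cx ((t,y),z) (Xs i))|]; apply Dx.
    - apply (deriv0_const (fun t => X i ((0,t),z))); intros t.
      eapply is_derive_val; [exact (partial_to_is_derive _ cy ((0,t),z) (Xs i))|]; apply Dy. }
  destruct i; try (apply K; discriminate). rewrite !Xz_zero; auto.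
Qed.
End S.

Definition smooth1 (g : R -> R) : Prop :=
  forall n, (forall z, ex_derive (Derive_n g n) z) /\ (forall z, continuous (Derive_n g n) z).

Lemma zfun_shape (g : R -> R) l : exists n k, forall p,
  iter_partial l (fun p => g (get p cz)) p = k * Derive_n g n (get p cz).
Proof.
  induction l as [|i l [n [k IH]]].
  - exists 0%nat, 1. intros p. simpl. ring.
  - destruct i.
    + exists n, 0. intros p. simpl. rewrite (partial_ext _ (fun q => k * Derive_n g n (get q cz))) by auto.
      destruct p as [[x y] z]. unfold partial; simpl. rewrite Derive_const; ring.
    + exists n, 0. intros p. simpl. rewrite (partial_ext _ (fun q => k * Derive_n g n (get q cz))) by auto.
      destruct p as [[x y] z]. unfold partial; simpl. rewrite Derive_const; ring.
    + exists (S n), k. intros p. simpl. rewrite (partial_ext _ (fun q => k * Derive_n g n (get q cz))) by auto.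
      destruct p as [[x y] z]. unfold partial; simpl. rewrite Derive_scal. reflexivity.
Qed.

Lemma cont_z_fun (h : R -> R) (p : pt) : (forall z, continuous h z) -> continuous (fun q : pt => h (get q cz)) p.
Proof.
  intros H. destruct p as [[x y] z].
  apply (continuous_comp (fun q : pt => snd q) h ((x,y),z)).
  apply continuous_snd. apply H.
Qed.

Lemma zfun_smooth (g : R -> R) : smooth1 g -> smooth (fun p => g (get p cz)).
Proof.
  intros Hg l. destruct (zfun_shape g l) as [n [k E]]. split.
  - intros p. eapply continuous_ext. intros q; symmetry; apply E.
    apply (continuous_mult (fun _ => k) (fun q : pt => Derive_n g n (get q cz))).
    apply continuous_const. apply cont_z_fun, Hg.
  - intros i p. eapply ex_derive_ext. intros t; symmetry; apply E.
    destruct p as [[x y] z]; destruct i; simpl.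
    + apply ex_derive_const. + apply ex_derive_const.
    + apply ex_derive_scal, Hg.
Qed.

Lemma zfun_tfun (g : R -> R) : smooth1 g -> (forall t, g (t + 2*PI) = g t) -> tfun (fun p => g (get p cz)).
Proof.
  intros Hg Hp. split. apply zfun_smooth, Hg.
  intros [[x y] z] i. destruct i; simpl; auto.
Qed.

Lemma slice_smooth1 (G : pt -> R) x y : smooth G -> smooth1 (fun z => G ((x,y),z)).
Proof.
  intros HG.
  assert (E : forall n z, Derive_n (fun z => G ((x,y),z)) n z = iter_partial (repeat cz n) G ((x,y),z)).
  { induction n as [|n IH]; intros z; simpl. reflexivity.
    unfold partial; simpl. apply Derive_ext. apply IH. }
  intros n. split.
  - intros z. eapply ex_derive_ext. intros t; symmetry; apply E.
    exact (proj2 (HG (repeat cz n)) cz ((x,y),z)).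
  - intros z. eapply continuous_ext. intros t; symmetry; apply E.
    exact (cont_line _ (fun s => ((x,y),s)) z (cont_z x y z) (proj1 (HG (repeat cz n)))).
Qed.

Definition mean (v : R -> R) := RInt v 0 (2*PI) / (2*PI).

Lemma smooth1_affine (v : R -> R) k m : smooth1 v -> smooth1 (fun t => k * (v t - m)).
Proof.
  intros Hv.
  assert (Ev : forall z, ex_derive v z) by apply (proj1 (Hv 0%nat)).
  assert (E : forall n z, Derive_n (fun t => k * (v t - m)) (S n) z = k * Derive_n v (S n) z).
  { induction n as [|n IH]; intros z.
    - simpl. rewrite Derive_scal, Derive_minus, Derive_const by (auto; apply ex_derive_const). change (fun x : R => v x) with v. ring.
    - simpl. rewrite (Derive_ext _ (fun t => k * Derive_n v (S n) t)) by apply IH.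
      apply Derive_scal. }
  intros [|n].
  - simpl. split; intros z.
    + apply ex_derive_scal. apply (ex_derive_minus v (fun _ => m)); auto. apply ex_derive_const.
    + apply (continuous_mult (fun _ => k) (fun t => v t - m)). apply continuous_const.
      apply (continuous_minus v (fun _ => m)). apply (proj2 (Hv 0%nat)). apply continuous_const.
  - split; intros z.
    + eapply ex_derive_ext. intros t; symmetry; apply E. apply ex_derive_scal, Hv.
    + eapply continuous_ext. intros t; symmetry; apply E.
      apply (continuous_mult (fun _ => k) (Derive_n v (S n))). apply continuous_const. apply Hv.
Qed.

Lemma primitive_per (v : R -> R) (k : R) : smooth1 v -> (forall t, v (t + 2*PI) = v t) ->
  exists U, smooth1 U /\ (forall t, U (t + 2*PI) = U t) /\
    forall z, is_derive U z (k * (v z - mean v)).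
Proof.
  intros Hv Hp.
  set (m := mean v). set (w := fun t => k * (v t - m)).
  assert (Hw : smooth1 w) by (apply smooth1_affine; auto).
  assert (Cw : forall z, continuous w z) by apply (proj2 (Hw 0%nat)).
  assert (Cv : forall z, continuous v z) by apply (proj2 (Hv 0%nat)).
  assert (Iw : forall a b, ex_RInt w a b) by (intros; apply (ex_RInt_continuous (V:=R_CompleteNormedModule)); auto).
  set (U := fun z => RInt w 0 z).
  assert (DU : forall z, is_derive U z (w z)).
  { intros z. apply is_derive_RInt with (a := 0); auto.
    apply filter_forall. intros b. apply RInt_correct, Iw. }
  exists U. split; [|split].
  - intros [|n].
    + simpl. split; intros z. exists (w z); auto.
      exact (ex_derive_continuous U z (ex_intro _ _ (DU z))).
    + assert (E : forall z, Derive_n U (S n) z = Derive_n w n z).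
      { intros z. replace (S n) with (n+1)%nat by lia. rewrite <- (Derive_n_comp U n 1). apply Derive_n_ext.
        intros t. simpl. apply is_derive_unique, DU. }
      split; intros z.
      * eapply ex_derive_ext. intros t; symmetry; apply E. apply Hw.
      * eapply continuous_ext. intros t; symmetry; apply E. apply Hw.
  - intros t.
    assert (C : forall a b, U (a + 2*PI) - U a = U (b + 2*PI) - U b).
    { intros a b. apply (deriv0_const (fun t => U (t + 2*PI) - U t)). intros t'.
      eapply is_derive_val. apply (is_derive_minus (fun t => U (t + 2*PI)) U).
      2: apply DU.
      apply (is_derive_comp U (fun t => t + 2*PI)). apply DU.
      auto_derive; auto. 
      unfold w. rewrite Hp. unfold minus, plus, opp, scal; simpl. unfold mult; simpl. ring. }
    specialize (C t 0). rewrite Rplus_0_l in C.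
    assert (U0 : U 0 = 0) by (unfold U; rewrite RInt_point; reflexivity).
    assert (U2 : U (2*PI) = 0).
    { unfold U, w.
      rewrite (RInt_ext _ (fun t => scal k (minus (v t) m))) by (intros; reflexivity).
      rewrite (RInt_scal (V:=R_CompleteNormedModule) (fun t => minus (v t) m)). rewrite (RInt_minus (V:=R_CompleteNormedModule)). rewrite (RInt_const (V:=R_CompleteNormedModule)).
      unfold m, mean, minus, plus, opp, scal; simpl. unfold mult; simpl. field. apply PI_neq0.
      apply (ex_RInt_continuous (V:=R_CompleteNormedModule)); auto. apply ex_RInt_const.
      apply (ex_RInt_minus v (fun _ => m)). apply (ex_RInt_continuous (V:=R_CompleteNormedModule)); auto. apply ex_RInt_const. }
    lra.
  - intros z. apply DU.
Qed.

Lemma partial_lin f g k i p : smooth f -> smooth g ->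
  partial i (fun q => f q + k * g q) p = partial i f p + k * partial i g p.
Proof.
  intros Hf Hg. unfold partial.
  rewrite Derive_plus. rewrite Derive_scal. reflexivity.
  apply smooth_exd; auto. apply ex_derive_scal, smooth_exd; auto.
Qed.

Lemma iter_lin f g k l : smooth f -> smooth g -> forall p,
  iter_partial l (fun q => f q + k * g q) p = iter_partial l f p + k * iter_partial l g p.
Proof.
  intros Hf Hg. induction l as [|i l IH]; intros p; simpl. reflexivity.
  rewrite (partial_ext _ (fun q => iter_partial l f q + k * iter_partial l g q)) by apply IH.
  unfold partial. rewrite Derive_plus. rewrite Derive_scal. reflexivity.
  apply (proj2 (Hf l)). apply ex_derive_scal, (proj2 (Hg l)).
Qed.

Lemma smooth_lin f g k : smooth f -> smooth g -> smooth (fun q => f q + k * g q).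
Proof.
  intros Hf Hg l. split.
  - intros p. eapply continuous_ext. intros q; symmetry; apply iter_lin; auto.
    apply (continuous_plus (iter_partial l f) (fun q => k * iter_partial l g q)).
    apply (proj1 (Hf l)).
    apply (continuous_mult (fun _ => k) (iter_partial l g)). apply continuous_const. apply (proj1 (Hg l)).
  - intros i p. eapply ex_derive_ext. intros t; symmetry; apply iter_lin; auto.
    apply (ex_derive_plus (fun t => iter_partial l f (upd p i t)) (fun t => k * iter_partial l g (upd p i t))).
    apply (proj2 (Hf l)). apply ex_derive_scal, (proj2 (Hg l)).
Qed.

Lemma tfun_lin f g k : tfun f -> tfun g -> tfun (fun q => f q + k * g q).
Proof.
  intros [Hf Pf] [Hg Pg]. split. apply smooth_lin; auto.
  intros p i. rewrite Pf, Pg. reflexivity.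
Qed.

Lemma smooth1_const (c : R) : smooth1 (fun _ => c).
Proof.
  assert (E : forall n z, Derive_n (fun _ => c) (S n) z = 0).
  { induction n as [|n IH]; intros z; simpl. apply Derive_const.
    rewrite (Derive_ext _ (fun _ => 0)) by apply IH. apply Derive_const. }
  intros [|n]; simpl; split; intros z.
  - apply ex_derive_const. - apply continuous_const.
  - eapply ex_derive_ext. intros t; symmetry; apply E. apply ex_derive_const.
  - eapply continuous_ext. intros t; symmetry; apply E. apply continuous_const.
Qed.

Lemma tfun_const (c : R) : tfun (fun _ => c).
Proof.
  apply (zfun_tfun (fun _ => c)). apply smooth1_const. auto.
Qed.

Lemma form_lin (b a : Defs.form1) (k : R) : is_form1 b -> is_form1 a ->
  is_form1 (fun i p => b i p + k * a i p) /\
  forall j p, Defs.d1 (fun i p => b i p + k * a i p) j p = Defs.d1 b j p + k * Defs.d1 a j p.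
Proof.
  intros Hb Ha. split.
  - intros i. apply tfun_lin; auto.
  - intros j p. destruct j; simpl; rewrite !partial_lin by (apply Hb || apply Ha); ring.
Qed.

Lemma no_const_curl (F G : R -> R -> R) k :
  (forall s t, ex_derive (fun w => F s w) t) ->
  (forall x t, continuity_2d_pt (fun u v => Derive (fun z => F v z) u) x t) ->
  (forall s t, continuous (fun w => F w t) s) ->
  (forall s t, ex_derive (fun w => G w t) s) ->
  (forall s t, continuous (fun w => Derive (fun w' => G w' t) w) s) ->
  (forall s t, F s (t + 2*PI) = F s t) ->
  (forall s t, G (s + 2*PI) t = G s t) ->
  (forall s t, Derive (fun w => F s w) t - Derive (fun w => G w t) s = k) ->
  k = 0.
Proof.
  intros HF1 HF2 HF3 HG1 HG2 PF PG Hk.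
  assert (HP := PI_RGT_0).
  set (Psi := fun t => RInt (fun s => F s t) 0 (2*PI)).
  assert (D : forall t, is_derive Psi t (2*PI*k)).
  { intros t. eapply is_derive_val.
    - apply (is_derive_RInt_param (fun u s => F s u) 0 (2*PI) t).
      + apply filter_forall. intros x0 s _. apply HF1.
      + intros s _. apply HF2.
      + apply filter_forall. intros y. apply (ex_RInt_continuous (V:=R_CompleteNormedModule)). intros; apply HF3.
    - rewrite (RInt_ext _ (fun s => plus k (Derive (fun w => G w t) s))).
      2: { intros s _. unfold plus; simpl. rewrite <- (Hk s t). ring. }
      rewrite (RInt_plus (V:=R_CompleteNormedModule)).
      rewrite (RInt_const (V:=R_CompleteNormedModule)).
      rewrite (RInt_Derive (fun w => G w t)).
      rewrite <- (PG 0 t), Rplus_0_l. unfold scal, plus; simpl; unfold mult; simpl. ring.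
      intros; apply HG1. intros; apply HG2.
      apply ex_RInt_const.
      apply (ex_RInt_continuous (V:=R_CompleteNormedModule)). intros; apply HG2. }
  assert (C : Psi (2*PI) - 2*PI*k*(2*PI) = Psi 0 - 2*PI*k*0).
  { apply (deriv0_const (fun t => Psi t - 2*PI*k*t)). intros t.
    eapply is_derive_val. apply (is_derive_minus Psi (fun t => 2*PI*k*t)). apply D.
    auto_derive; auto. unfold minus, plus, opp; simpl. ring. }
  assert (E : Psi (2*PI) = Psi 0).
  { unfold Psi. apply RInt_ext. intros s _. rewrite <- (PF s 0). f_equal. ring. }
  rewrite E in C.
  assert (0 < 2*PI*(2*PI)) by nra.
  nra.
Qed.

Lemma cont_zx y a b : continuous (fun w : R * R => ((snd w, y), fst w) : pt) (a, b).
Proof.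
  apply cont_pair; [apply cont_pair|].
  apply continuous_snd. apply continuous_const. apply continuous_fst.
Qed.

Lemma no_exact_cx (g : Defs.form1) k : is_form1 g -> (forall p, Defs.d1 g cx p = k) -> k = 0.
Proof.
  intros Hg Hk.
  destruct (Hg cz) as [Sz Pz]. destruct (Hg cy) as [Sy Py].
  apply (no_const_curl (fun s t => g cz ((0,t),s)) (fun s t => g cy ((0,t),s)) k).
  - intros s t. exact (smooth_exd _ Sz cy ((0,t),s)).
  - intros x t. exact (cont2_gen (partial cy (g cz)) _ x t (cont_yz 0 x t) (smooth_cont _ (smooth_partial _ cy Sz))).
  - intros s t. exact (cont_line _ (fun w => ((0,t),w)) s (cont_z 0 t s) (smooth_cont _ Sz)).
  - intros s t. exact (smooth_exd _ Sy cz ((0,t),s)).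
  - intros s t. exact (cont_line _ (fun w => ((0,t),w)) s (cont_z 0 t s) (smooth_cont _ (smooth_partial _ cz Sy))).
  - intros s t. exact (Pz ((0,t),s) cy).
  - intros s t. exact (Py ((0,t),s) cz).
  - intros s t. exact (Hk ((0,t),s)).
Qed.

Lemma no_exact_cy (g : Defs.form1) k : is_form1 g -> (forall p, Defs.d1 g cy p = k) -> k = 0.
Proof.
  intros Hg Hk.
  destruct (Hg cx) as [Sx Px]. destruct (Hg cz) as [Sz Pz].
  apply (no_const_curl (fun s t => g cx ((s,0),t)) (fun s t => g cz ((s,0),t)) k).
  - intros s t. exact (smooth_exd _ Sx cz ((s,0),t)).
  - intros x t. exact (cont2_gen (partial cz (g cx)) _ x t (cont_zx 0 x t) (smooth_cont _ (smooth_partial _ cz Sx))).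
  - intros s t. exact (cont_line _ (fun w => ((w,0),t)) s (cont_x 0 t s) (smooth_cont _ Sx)).
  - intros s t. exact (smooth_exd _ Sz cx ((s,0),t)).
  - intros s t. exact (cont_line _ (fun w => ((w,0),t)) s (cont_x 0 t s) (smooth_cont _ (smooth_partial _ cx Sz))).
  - intros s t. exact (Px ((s,0),t) cz).
  - intros s t. exact (Pz ((s,0),t) cx).
  - intros s t. exact (Hk ((s,0),t)).
Qed.

Lemma smooth1_ext f g : (forall t, f t = g t) -> smooth1 f -> smooth1 g.
Proof.
  intros E H n. split; intros z.
  - eapply ex_derive_ext. intros t. apply Derive_n_ext, E. apply H.
  - eapply continuous_ext. intros t. apply Derive_n_ext, E. apply H.
Qed.

Lemma trig_shape a b n : exists a' b', forall z, Derive_n (fun t => a * cos t + b * sin t) n z = a' * cos z + b' * sin z.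
Proof.
  induction n as [|n [a' [b' IH]]].
  - exists a, b. intros; reflexivity.
  - exists b', (- a'). intros z. simpl.
    rewrite (Derive_ext _ (fun t => a' * cos t + b' * sin t)) by apply IH.
    apply is_derive_unique. auto_derive; auto. ring.
Qed.

Lemma smooth1_trig a b : smooth1 (fun t => a * cos t + b * sin t).
Proof.
  intros n. destruct (trig_shape a b n) as [a' [b' E]]. split; intros z.
  - eapply ex_derive_ext. intros t; symmetry; apply E. auto_derive; auto.
  - eapply continuous_ext. intros t; symmetry; apply E.
    apply (ex_derive_continuous (K:=R_AbsRing) (V:=R_NormedModule)). auto_derive; auto.
Qed.

Lemma smooth1_cos : smooth1 cos.
Proof. apply (smooth1_ext (fun t => 1 * cos t + 0 * sin t)). intros; ring. apply smooth1_trig. Qed.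
Lemma smooth1_sin : smooth1 sin.
Proof. apply (smooth1_ext (fun t => 0 * cos t + 1 * sin t)). intros; ring. apply smooth1_trig. Qed.

Lemma cos_2pi t : cos (t + 2*PI) = cos t.
Proof. rewrite cos_plus, cos_2PI, sin_2PI. ring. Qed.
Lemma sin_2pi t : sin (t + 2*PI) = sin t.
Proof. rewrite sin_plus, cos_2PI, sin_2PI. ring. Qed.

Lemma theta_form : is_form1 theta.
Proof.
  intros [| |].
  - exact (zfun_tfun cos smooth1_cos cos_2pi).
  - exact (zfun_tfun sin smooth1_sin sin_2pi).
  - exact (tfun_const 0).
Qed.

Lemma d1_theta x y z i : Defs.d1 theta i ((x,y),z) =
  match i with cx => - cos z | cy => - sin z | cz => 0 end.
Proof. destruct i; simpl; rewrite !pth; ring. Qed.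

Lemma mu_val p : mu p = - / 2.
Proof.
  destruct p as [[x y] z]. unfold mu, wedge12, sum3. rewrite !d1_theta. simpl.
  assert (H := sin2_cos2 z). unfold Rsqr in H. nra.
Qed.

Lemma contact_theta : is_contact theta.
Proof.
  split. apply theta_form. intros p.
  assert (H := mu_val p). unfold mu in H. lra.
Qed.

Lemma sqrt3_irr_aux (n : nat) : forall k m : Z, (Z.abs_nat k <= n)%nat -> k <> 0%Z -> (m*m = 3*k*k)%Z -> False.
Proof.
  induction n as [|n IH]; intros k m Hn Hk E.
  - apply Hk. lia.
  - assert (Hd := Z.div_mod m 3 ltac:(lia)). assert (Hr := Z.mod_pos_bound m 3 ltac:(lia)).
    set (q := (m / 3)%Z) in *. set (r := (m mod 3)%Z) in *.
    assert (Hr0 : r = 0%Z).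
    { destruct (Z.eq_dec r 0) as [|Hr1]; auto. exfalso.
      assert (r = 1 \/ r = 2)%Z as [-> | ->] by lia; rewrite Hd in E; nia. }
    rewrite Hr0 in Hd. rewrite Hd in E.
    assert (E2 : (k * k = 3 * q * q)%Z) by nia.
    assert (Hq : q <> 0%Z) by (intro Hq0; rewrite Hq0 in E2; nia).
    apply (IH q k); auto.
    assert (Z.abs q < Z.abs k)%Z by nia. lia.
Qed.

Lemma sqrt3_irr (k m : Z) : k <> 0%Z -> (m*m = 3*k*k)%Z -> False.
Proof. intros. apply (sqrt3_irr_aux (Z.abs_nat k) k m); auto. Qed.

Lemma reeb_val Rb : is_reeb Rb -> forall x y z,
  Rb cx ((x,y),z) = cos z /\ Rb cy ((x,y),z) = sin z /\ Rb cz ((x,y),z) = 0.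
Proof.
  intros [_ [H1 H2]] x y z.
  specialize (H1 ((x,y),z)). unfold ins1, sum3 in H1. simpl in H1.
  assert (A := H2 cx ((x,y),z)). assert (B := H2 cy ((x,y),z)). assert (C := H2 cz ((x,y),z)).
  unfold ins2 in A, B, C. rewrite !d1_theta in A, B, C.
  assert (S := sin2_cos2 z). unfold Rsqr in S.
  set (a := Rb cx ((x,y),z)) in *. set (b := Rb cy ((x,y),z)) in *. set (c := Rb cz ((x,y),z)) in *.
  assert (Hc : c = 0).
  { replace c with (sin z * (sin z * c) + cos z * (cos z * c)) by (symmetry; rewrite <- (Rmult_1_l c) at 1; rewrite <- S; ring).
    assert (sin z * c = 0) by lra. assert (cos z * c = 0) by lra.
    rewrite H, H0. ring. }
  split; [|split; auto].
  - replace a with (cos z * (a * cos z + b * sin z + c * 0) + sin z * (sin z * a - cos z * b))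
      by (symmetry; rewrite <- (Rmult_1_l a) at 1; rewrite <- S; ring).
    assert (E1 : a * cos z + b * sin z + c * 0 = 1) by lra. assert (E2 : sin z * a - cos z * b = 0) by lra.
    rewrite E1, E2. ring.
  - replace b with (sin z * (a * cos z + b * sin z + c * 0) - cos z * (sin z * a - cos z * b))
      by (symmetry; rewrite <- (Rmult_1_l b) at 1; rewrite <- S; ring).
    assert (E1 : a * cos z + b * sin z + c * 0 = 1) by lra. assert (E2 : sin z * a - cos z * b = 0) by lra.
    rewrite E1, E2. ring.
Qed.

Lemma reeb_orbit : has_nonclosed_reeb_orbit.
Proof.
  intros Rb HR.
  exists (fun t => ((t * / 2, t * (sqrt 3 / 2)), PI / 3)). split.
  - intros t i. destruct (reeb_val Rb HR (t * / 2) (t * (sqrt 3 / 2)) (PI/3)) as [A [B C]].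
    destruct i; simpl.
    + rewrite A, cos_PI3. auto_derive; auto.
    + rewrite B, sin_PI3. auto_derive; auto. ring.
    + rewrite C. auto_derive; auto.
  - intros t Ht. apply NNPP. intros Hn.
    assert (Hx : exists k1 : Z, t * / 2 - 0 * / 2 = 2 * PI * IZR k1).
    { apply NNPP; intros H. apply Hn. exists cx. intros k Hk. apply H. exists k. exact Hk. }
    assert (Hy : exists k2 : Z, t * (sqrt 3 / 2) - 0 * (sqrt 3 / 2) = 2 * PI * IZR k2).
    { apply NNPP; intros H. apply Hn. exists cy. intros k Hk. apply H. exists k. exact Hk. }
    destruct Hx as [k1 E1]. destruct Hy as [k2 E2].
    assert (HP := PI_RGT_0).
    assert (Et : t = 4 * PI * IZR k1) by lra.
    assert (Hk1 : k1 <> 0%Z) by (intro H0; rewrite H0 in Et; simpl in Et; lra).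
    rewrite Et in E2.
    assert (E3 : sqrt 3 * IZR k1 = IZR k2).
    { apply Rmult_eq_reg_l with (2 * PI); [|lra]. rewrite <- E2. field. }
    apply (sqrt3_irr k1 k2 Hk1). apply eq_IZR. rewrite !mult_IZR.
    rewrite <- E3. replace (sqrt 3 * IZR k1 * (sqrt 3 * IZR k1)) with ((sqrt 3 * sqrt 3) * IZR k1 * IZR k1) by ring.
    rewrite sqrt_sqrt by lra. ring.
Qed.

Lemma partial_const c i p : partial i (fun _ => c) p = 0.
Proof. unfold partial. apply Derive_const. Qed.

Lemma partial_zfun (g : R -> R) i x y z : partial i (fun p => g (get p cz)) ((x,y),z) =
  match i with cz => Derive g z | _ => 0 end.
Proof. unfold partial. destruct i; simpl; try apply Derive_const. reflexivity. Qed.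

Lemma exact2_ext (w1 w2 : Defs.form2) : (forall i p, w1 i p = w2 i p) -> exact2 w1 -> exact2 w2.
Proof. intros E [a [Ha Hd]]. exists a. split; auto. intros; rewrite <- E; auto. Qed.

Lemma exact2_zero (w : Defs.form2) : (forall i p, w i p = 0) -> exact2 w.
Proof.
  intros E. exists (fun _ _ => 0). split.
  - intros i. apply tfun_const.
  - intros i p. rewrite E. destruct i; simpl; rewrite !partial_const; ring.
Qed.

Definition cfield (c1 c2 : R) : vfield := fun i _ => match i with cx => c1 | cy => c2 | cz => 0 end.

Lemma cfield_strict c1 c2 : strict_contact (cfield c1 c2).
Proof.
  split.
  - intros [| |]; unfold cfield; apply tfun_const.
  - intros j [[x y] z]. unfold lie1, sum3. rewrite !pth.
    unfold cfield. rewrite !partial_const. destruct j; simpl; ring.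
Qed.

Lemma vlin_unique X a b a' b' : exact2 (ins3 (vlin X a b) mu) -> exact2 (ins3 (vlin X a' b') mu) ->
  a' = a /\ b' = b.
Proof.
  intros [al [Ha Ea]] [be [Hb Eb]].
  destruct (form_lin be al (-1) Hb Ha) as [Hg Eg].
  split.
  - assert (K := no_exact_cx _ (- / 2 * (a - a')) Hg).
    assert (K' : - / 2 * (a - a') = 0).
    { apply K. intros p. rewrite Eg, <- Ea, <- Eb. unfold ins3, vlin. rewrite mu_val. simpl. ring. }
    lra.
  - assert (K := no_exact_cy _ (- / 2 * (b - b')) Hg).
    assert (K' : - / 2 * (b - b') = 0).
    { apply K. intros p. rewrite Eg, <- Ea, <- Eb. unfold ins3, vlin. rewrite mu_val. simpl. ring. }
    lra.
Qed.


Lemma partial_vlin X a b i k p : smooth (X i) ->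
  partial k (vlin X a b i) p = partial k (X i) p.
Proof.
  intros Hs.
  set (c := a * dX i p + b * dY i p).
  rewrite (partial_ext _ (fun q => X i q + (-1) * (fun _ => c) q)).
  - rewrite partial_lin; auto. rewrite partial_const. ring.
    apply (tfun_const c).
  - intros q. unfold vlin, c. destruct i; simpl; ring.
Qed.

Lemma lie1_vlin X a b j p : (forall i, smooth (X i)) -> lie1 (vlin X a b) theta j p = lie1 X theta j p.
Proof.
  intros Hs. destruct p as [[x y] z].
  unfold lie1, sum3. rewrite !partial_vlin by auto. rewrite !pth. unfold vlin. destruct j; simpl; ring.
Qed.

Lemma vlin_strict X a b : strict_contact X -> strict_contact (vlin X a b).
Proof.
  intros HX. split.
  - intros i.
    replace (vlin X a b i) with (fun q => X i q + (-1) * (fun _ : pt => a * dX i ((0,0),0) + b * dY i ((0,0),0)) q).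
    + apply tfun_lin. apply (proj1 HX). apply tfun_const.
    + apply functional_extensionality; intros q; unfold vlin; destruct i; simpl; ring.
  - intros j p. rewrite lie1_vlin. apply (proj2 HX). intros i; apply (proj1 HX).
Qed.

Lemma vlin_exists X : strict_contact X -> exists a b, exact2 (ins3 (vlin X a b) mu).
Proof.
  intros HX.
  set (u1 := fun z => X cx ((0,0),z)). set (u2 := fun z => X cy ((0,0),z)).
  assert (S1 : smooth1 u1) by (apply slice_smooth1, (proj1 HX)).
  assert (S2 : smooth1 u2) by (apply slice_smooth1, (proj1 HX)).
  assert (P1 : forall t, u1 (t + 2*PI) = u1 t) by (intros t; exact (proj2 (proj1 HX cx) ((0,0),t) cz)).
  assert (P2 : forall t, u2 (t + 2*PI) = u2 t) by (intros t; exact (proj2 (proj1 HX cy) ((0,0),t) cz)).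
  destruct (primitive_per u1 (/2) S1 P1) as [U1 [SU1 [PU1 DU1]]].
  destruct (primitive_per u2 (-/2) S2 P2) as [U2 [SU2 [PU2 DU2]]].
  exists (mean u1), (mean u2).
  exists (fun i p => match i with cx => U2 (get p cz) | cy => U1 (get p cz) | cz => 0 end).
  split.
  - intros [| |]. exact (zfun_tfun U2 SU2 PU2). exact (zfun_tfun U1 SU1 PU1). apply tfun_const.
  - intros i [[x y] z]. unfold ins3, vlin. rewrite mu_val.
    rewrite (X_of_z X HX i x y z).
    destruct i; simpl.
    + rewrite partial_const.
      replace (partial cz (fun p : pt => U1 (snd p)) ((x,y),z)) with (Derive U1 z) by reflexivity.
      rewrite (is_derive_unique _ _ _ (DU1 z)). unfold u1. ring.
    + rewrite partial_const.
      replace (partial cz (fun p : pt => U2 (snd p)) ((x,y),z)) with (Derive U2 z) by reflexivity.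
      rewrite (is_derive_unique _ _ _ (DU2 z)). unfold u2. ring.
    + rewrite (Xz_zero X HX).
      replace (partial cx (fun p : pt => U1 (snd p)) ((x,y),z)) with 0 by (symmetry; unfold partial; simpl; apply Derive_const).
      replace (partial cy (fun p : pt => U2 (snd p)) ((x,y),z)) with 0 by (symmetry; unfold partial; simpl; apply Derive_const).
      ring.
Qed.

Lemma strict_dxy X j x y z : strict_contact X ->
  partial cx (X j) ((x,y),z) = 0 /\ partial cy (X j) ((x,y),z) = 0.
Proof.
  intros HX. split; unfold partial; simpl.
  - rewrite (Derive_ext _ (fun _ => X j ((0,0),z))) by (intros; apply X_of_z; auto). apply Derive_const.
  - rewrite (Derive_ext _ (fun _ => X j ((0,0),z))) by (intros; apply X_of_z; auto). apply Derive_const.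
Qed.

Lemma bracket_zero X Y : strict_contact X -> strict_contact Y -> bracket X Y = cfield 0 0.
Proof.
  intros HX HY. apply functional_extensionality; intros j. apply functional_extensionality; intros [[x y] z].
  unfold bracket, sum3.
  destruct (strict_dxy Y j x y z HY) as [A1 A2]. destruct (strict_dxy X j x y z HX) as [B1 B2].
  rewrite A1, A2, B1, B2, (Xz_zero X HX), (Xz_zero Y HY).
  destruct j; simpl; ring.
Qed.

Lemma zero_exact_strict : exact_strict_contact (cfield 0 0).
Proof.
  split. apply cfield_strict. apply exact2_zero. intros i p. unfold ins3, cfield. destruct i; ring.
Qed.

Theorem mainTheorem4 :
  is_contact theta /\ has_nonclosed_reeb_orbit /\
  strict_contact dX /\ strict_contact dY /\
  (forall X, strict_contact X ->
     exists a b, exact_strict_contact (vlin X a b) /\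
       forall a' b', exact_strict_contact (vlin X a' b') -> a' = a /\ b' = b) /\
  (forall X Y, strict_contact X -> exact_strict_contact Y ->
     exact_strict_contact (bracket X Y)) /\
  (forall X, strict_contact X -> exists a b, exact2 (flin (ins3 X mu) a b)) /\
  (forall a b, exists X, strict_contact X /\ exact2 (flin (ins3 X mu) a b)) /\
  (forall a b, exact2 (flin (fun _ _ => 0) a b) -> a = 0 /\ b = 0).
Proof.
  split; [apply contact_theta|].
  split; [apply reeb_orbit|].
  split; [exact (cfield_strict 1 0)|].
  split; [exact (cfield_strict 0 1)|].
  split.
  { intros X HX. destruct (vlin_exists X HX) as [a [b Hab]]. exists a, b. split.
    - split; [apply vlin_strict; auto|auto].
    - intros a' b' [_ H']. apply (vlin_unique X a b a' b' Hab H'). }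
  split.
  { intros X Y HX [HY _]. rewrite bracket_zero by auto. apply zero_exact_strict. }
  split.
  { intros X HX. destruct (vlin_exists X HX) as [a [b H]]. exists (- a / 2), (b / 2).
    eapply exact2_ext; [|exact H]. intros i p. unfold ins3, vlin, flin. rewrite mu_val.
    destruct i; simpl; field. }
  split.
  { intros a b. exists (cfield (-2*a) (2*b)). split. apply cfield_strict.
    apply exact2_zero. intros i p. unfold flin, ins3, cfield. rewrite mu_val. destruct i; simpl; field. }
  { intros a b [g [Hg E]]. split.
    - assert (K : - a = 0).
      { apply (no_exact_cx g (-a) Hg). intros p. rewrite <- E. unfold flin; simpl; ring. }
      lra.
    - apply (no_exact_cy g b Hg). intros p. rewrite <- E. unfold flin; simpl; ring. }
Qed.
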